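(* Let $G=G_1\otimes G_2$, where $G_1$ and $G_2$ are arbitrary vertex-disjoint graphs, and let $I_s,I_t$ be independent sets of $G$. Then the length of a shortest reconfiguration sequence from $I_s$ to $I_t$ is at most $2$.
   Context: All graphs are finite, simple, undirected, with nonempty vertex sets. The join of vertex-disjoint graphs $G_1=(V_1,E_1)$, $G_2=(V_2,E_2)$ is $G_1\otimes G_2=(V_1\cup V_2,\,E_1\cup E_2\cup\{v_1v_2: v_1\in V_1,v_2\in V_2\})$. A reconfiguration sequence from $I_s$ to $I_t$ of length $\ell$ is a sequence $\langle I_s=I_0,\dots,I_\ell=I_t\rangle$ of independent sets of $G$ such that the induced subgraph $G[I_{i-1}\triangle I_i]$ is connected for every $i\in\{1,\dots,\ell\}$. *)

(* Defs.v *)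
From mathcomp Require Import all_boot.
Set Implicit Arguments. Unset Strict Implicit. Unset Printing Implicit Defensive.

Definition simple_graph (T : finType) (e : rel T) : Prop :=
  symmetric e /\ irreflexive e.

(* Join G1 (x) G2 on the disjoint union T1 + T2: edges of G1, edges of G2,
   and all edges between a vertex of V1 and a vertex of V2. *)
Definition join_rel (T1 T2 : finType) (e1 : rel T1) (e2 : rel T2) : rel (T1 + T2) :=
  fun u v =>
    match u, v with
    | inl x, inl y => e1 x y
    | inr x, inr y => e2 x y
    | _, _ => true
    end.

Definition independent (T : finType) (e : rel T) (S : {set T}) : bool :=
  [forall x in S, forall y in S, ~~ e x y].

Definition induced_rel (T : finType) (e : rel T) (S : {set T}) : rel T :=
  fun x y => [&& x \in S, y \in S & e x y].

(* G[S] is connected (graphs have nonempty vertex sets). *)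
Definition induced_connected (T : finType) (e : rel T) (S : {set T}) : bool :=
  (S != set0) && [forall x in S, forall y in S, connect (induced_rel e S) x y].

Definition symdiff (T : finType) (A B : {set T}) : {set T} :=
  (A :\: B) :|: (B :\: A).

Definition reconf_step (T : finType) (e : rel T) : rel {set T} :=
  fun A B => induced_connected e (symdiff A B).

(* Is :: rest is a reconfiguration sequence from Is to It, of length size rest. *)
Definition reconf_seq (T : finType) (e : rel T) (Is It : {set T})
    (rest : seq {set T}) : bool :=
  [&& all (independent e) (Is :: rest), path (reconf_step e) Is rest
    & last Is rest == It].

(* Main.v *)
Require Import Defs.
From mathcomp Require Import all_boot.
Set Implicit Arguments. Unset Strict Implicit.

Section Aux.
Variables (T : finType) (e : rel T).

Lemma conn_center (S : {set T}) (c : T) :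
  c \in S ->
  (forall u, u \in S -> connect (induced_rel e S) u c /\ connect (induced_rel e S) c u) ->
  induced_connected e S.
Proof.
move=> cS H; apply/andP; split; first by apply/set0Pn; exists c.
apply/forallP=> u; apply/implyP=> uS; apply/forallP=> w; apply/implyP=> wS.
have [H1 _] := H u uS; have [_ H2] := H w wS.
exact: connect_trans H1 H2.
Qed.

Lemma conn_star (S : {set T}) (c : T) :
  c \in S -> (forall u, u \in S -> u != c -> e u c && e c u) ->
  induced_connected e S.
Proof.
move=> cS H; apply: (conn_center cS) => u uS.
case: (eqVneq u c) => [->|ne]; first by split; apply: connect0.
have /andP[a b] := H u uS ne.
split; apply: connect1; rewrite /induced_rel ?uS ?cS /=; by [rewrite uS cS|].
Qed.
End Aux.

Section Join.
Variables (T1 T2 : finType) (e1 : rel T1) (e2 : rel T2).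
Notation E := (join_rel e1 e2).

Lemma conn_mixed (S : {set T1 + T2}) x y :
  inl x \in S -> inr y \in S -> induced_connected E S.
Proof.
move=> xS yS; apply: (conn_center xS) => u uS.
have ex : induced_rel E S (inl x) (inr y) by rewrite /induced_rel xS yS.
have ey : induced_rel E S (inr y) (inl x) by rewrite /induced_rel xS yS.
case: u uS => [a|b] uS.
- have ea : induced_rel E S (inl a) (inr y) by rewrite /induced_rel uS yS.
  have eb : induced_rel E S (inr y) (inl a) by rewrite /induced_rel uS yS.
  split; apply: (connect_trans (connect1 _) (connect1 _)); eassumption.
- have ea : induced_rel E S (inr b) (inl x) by rewrite /induced_rel uS xS.
  have eb : induced_rel E S (inl x) (inr b) by rewrite /induced_rel uS xS.
  by split; apply: connect1.
Qed.

Lemma indep_side (S : {set T1 + T2}) x y :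
  independent E S -> inl x \in S -> inr y \in S -> False.
Proof.
move=> /forallP /(_ (inl x)) /implyP H xS yS.
by move: (H xS) => /forallP /(_ (inr y)) /implyP /(_ yS).
Qed.
End Join.

Theorem lemma25 (T1 T2 : finType) (e1 : rel T1) (e2 : rel T2)
  (h1 : simple_graph e1) (h2 : simple_graph e2)
  (n1 : 0 < #|T1|) (n2 : 0 < #|T2|)
  (Is It : {set T1 + T2}) :
  independent (join_rel e1 e2) Is -> independent (join_rel e1 e2) It ->
  exists rest : seq {set T1 + T2},
    size rest <= 2 /\ reconf_seq (join_rel e1 e2) Is It rest.
Proof.
move=> iS iT.
have indep1 v : independent (join_rel e1 e2) [set v].
  apply/forallP=> a; apply/implyP=> /set1P ->; apply/forallP=> b;
  apply/implyP=> /set1P ->.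
  by case: v => [x|y] /=; [rewrite h1.2 | rewrite h2.2].
have two v : v \notin Is -> v \notin It ->
   (forall u, u \in Is :|: It -> join_rel e1 e2 u v && join_rel e1 e2 v u) ->
   exists rest, size rest <= 2 /\ reconf_seq (join_rel e1 e2) Is It rest.
  move=> vS vT Hv; exists [:: [set v]; It]; split => //.
  rewrite /reconf_seq /= iS iT indep1 eqxx /= andbT /reconf_step.
  apply/andP; split; rewrite ?andbT; eapply (conn_star (c:=v)).
  - by rewrite /symdiff !inE eqxx vS orbT.
  - move=> u; rewrite /symdiff !inE => /orP[/andP[_ uI]|/andP[_ ->]//] _.
    by apply: Hv; rewrite inE uI.
  - by rewrite /symdiff !inE eqxx vT.
  - move=> u; rewrite /symdiff !inE => /orP[/andP[_ ->]//|/andP[_ uI]] _.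
    by apply: Hv; rewrite inE uI orbT.
case: (boolP [exists x, inl x \in Is :|: It]) => [/existsP[a Ha]|/existsPn nL].
  case: (boolP [exists y, inr y \in Is :|: It]) => [/existsP[b Hb]|/existsPn nR].
  - exists [:: It]; split => //.
    rewrite /reconf_seq /= iS iT eqxx /= !andbT /reconf_step.
    move: Ha Hb; rewrite !inE => /orP[aS|aT] /orP[bS|bT].
    + by case: (indep_side iS aS bS).
    + have aT : inl a \notin It by apply/negP=> aT; case: (indep_side iT aT bT).
      have bS : inr b \notin Is by apply/negP=> bS; case: (indep_side iS aS bS).
      by apply: (@conn_mixed _ _ e1 e2 _ a b); rewrite /symdiff !inE ?aS ?aT ?bS ?bT.
    + have aS : inl a \notin Is by apply/negP=> aS; case: (indep_side iS aS bS).
      have bT : inr b \notin It by apply/negP=> bT; case: (indep_side iT aT bT).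
      by apply: (@conn_mixed _ _ e1 e2 _ a b); rewrite /symdiff !inE ?aS ?aT ?bS ?bT.
    + by case: (indep_side iT aT bT).
  - case/card_gt0P: n2 => y0 _.
    apply: (two (inr y0)).
    + by apply/negP=> H; move: (nR y0); rewrite inE H.
    + by apply/negP=> H; move: (nR y0); rewrite inE H orbT.
    + case=> [x|y] H //; by move: (nR y); rewrite H.
case/card_gt0P: n1 => x0 _.
apply: (two (inl x0)).
+ by apply/negP=> H; move: (nL x0); rewrite inE H.
+ by apply/negP=> H; move: (nL x0); rewrite inE H orbT.
+ case=> [x|y] H //; by move: (nL x); rewrite H.
Qed.
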